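(* Let $G=(V,E)$ be a graph, $a$ a positive integer, and $V_D'\subseteq V$. Let $S_1,\dots,S_k$ be pairwise disjoint nonempty vertex sets such that, for every $u\in V_D'$, either $N^a(u)\subseteq S_i$ for some $i\in\{1,\dots,k\}$, or $N^a(u)\cap(S_1\cup\cdots\cup S_k)=\emptyset$. Let $$S=\{v\in V:\operatorname{dist}(v,S_1\cup\cdots\cup S_k)\le a\}.$$ If $G[S]$ is connected, then: 1. $N_S=\sum_{i=1}^k N_{S_i}$; 2. $D_S\le-1+\sum_{i=1}^k(D_{S_i}+2a+1)$.
   Context: $\operatorname{dist}$ is the shortest-path distance in $G$; $\operatorname{dist}(u,X)=\min_{x\in X}\operatorname{dist}(u,x)$; $N^r(v)=\{u:\operatorname{dist}(u,v)\le r\}$. For a vertex set $X$ (with $V_D'$ and $a$ fixed): - $N_X$ is the maximum size of a subset $X^*\subseteq X\cap V_D'$ such that $\operatorname{dist}(u,v)>2a$ for every pair of distinct $u,v\in X^*$; - $D_X$ is the diameter of the induced subgraph $G[X]$ (equal to $\infty$ if $G[X]$ is disconnected). *)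

(* Defs.v *)
From mathcomp Require Import all_boot.
Set Implicit Arguments. Unset Strict Implicit. Unset Printing Implicit Defensive.

Section Graphs.
Variable T : finType.

Definition simple_graph (e : rel T) : Prop := symmetric e /\ irreflexive e.

(* ball e r u = N^r(u) = { v | dist(u,v) <= r } (walks of length <= r). *)
Fixpoint ball (e : rel T) (r : nat) (u : T) : {set T} :=
  match r with
  | 0 => [set u]
  | r'.+1 => ball e r' u :|: [set y | [exists x in ball e r' u, e x y]]
  end.

Definition induced (e : rel T) (X : {set T}) : rel T :=
  fun x y => [&& x \in X, y \in X & e x y].

(* Shortest-path distance (meaningful when v is reachable from u):
   the least n with v \in ball e n u. *)
Definition dist (e : rel T) (u v : T) : nat :=
  find (fun n => v \in ball e n u) (iota 0 #|T|.+1).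

Definition induced_connected (e : rel T) (X : {set T}) : bool :=
  (X != set0) && [forall u in X, forall v in X, connect (induced e X) u v].

(* D_X : diameter of G[X]; None stands for infinity (G[X] disconnected). *)
Definition diam (e : rel T) (X : {set T}) : option nat :=
  if [forall u in X, forall v in X, connect (induced e X) u v]
  then Some (\max_(u in X) \max_(v in X) dist (induced e X) u v)
  else None.

Definition separated (e : rel T) (a : nat) (Y : {set T}) : bool :=
  [forall u in Y, forall v in Y, (u != v) ==> (v \notin ball e (2 * a) u)].

Definition Nnum (e : rel T) (a : nat) (VD X : {set T}) : nat :=
  \max_(Y : {set T} | (Y \subset X :&: VD) && separated e a Y) #|Y|.

Definition thicken (e : rel T) (a : nat) (U : {set T}) : {set T} :=
  [set v | [exists x in U, x \in ball e a v]].

End Graphs.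

(* Extended naturals nat ∪ {∞} as option nat (None = ∞). *)
Definition eadd (x y : option nat) : option nat :=
  match x, y with Some m, Some n => Some (m + n) | _, _ => None end.
Definition epred (x : option nat) : option nat :=
  match x with Some m => Some (m - 1) | None => None end.
Definition ele (x y : option nat) : bool :=
  match x, y with
  | _, None => true
  | None, Some _ => false
  | Some m, Some n => m <= n
  end.

(* Main.v *)
Require Import Defs.
From mathcomp Require Import all_boot.
From mathcomp Require Import zify.
Set Implicit Arguments. Unset Strict Implicit. Unset Printing Implicit Defensive.

Section Balls.
Variable T : finType.
Implicit Types (e : rel T) (u v w x y : T) (X : {set T}).

Lemma ball_center e r u : u \in ball e r u.
Proof. elim: r => [|r IH] /=; [exact: set11 | by rewrite inE IH]. Qed.

Lemma ball_step e r u : ball e r u \subset ball e r.+1 u.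
Proof. exact: subsetUl. Qed.

Lemma ball_mono e r s u : r <= s -> ball e r u \subset ball e s u.
Proof.
move=> /subnK <-; elim: (s - r) => [|n IH] //=.
by apply: subset_trans IH (ball_step _ _ _).
Qed.

Lemma ball_edge e r u x y : x \in ball e r u -> e x y -> y \in ball e r.+1 u.
Proof.
move=> hx exy /=; rewrite !inE; apply/orP; right; apply/existsP; exists x.
by rewrite hx.
Qed.

Lemma ball_trans e r s u v w :
  v \in ball e r u -> w \in ball e s v -> w \in ball e (r + s) u.
Proof.
move=> hv; elim: s w => [|s IH] w /=.
  by rewrite inE addn0 => /eqP ->.
rewrite !inE => /orP[/IH h|/existsP[w' /andP[/IH h ew]]].
  by rewrite addnS; apply: (subsetP (ball_step _ _ _)).
by rewrite addnS; apply: ball_edge h ew.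
Qed.

Lemma ball_split e r s u w :
  w \in ball e (r + s) u -> exists2 v, v \in ball e r u & w \in ball e s v.
Proof.
elim: s w => [|s IH] w.
  by rewrite addn0 => h; exists w => //; rewrite /= inE.
rewrite addnS /= !inE => /orP[/IH [v hv hw]|/existsP[w' /andP[/IH [v hv hw] ew]]].
  by exists v => //; rewrite !inE hw.
by exists v => //; apply: ball_edge hw ew.
Qed.

Lemma ball_succ e r u y : y \in ball e r.+1 u ->
  y \in ball e r u \/ exists2 x, x \in ball e r u & e x y.
Proof.
rewrite /= !inE => /orP[->|/existsP[x /andP[h1 h2]]]; [by left|by right; exists x].
Qed.

Lemma ball_sym e r u v : symmetric e -> v \in ball e r u -> u \in ball e r v.
Proof.
move=> se; elim: r v => [|r IH] v.
  by rewrite /= !inE eq_sym.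
move=> /ball_succ [/IH h|[v' /IH h ev]].
  by apply: (subsetP (ball_step _ _ _)).
have h1 : v' \in ball e 1 v by apply: (ball_edge (ball_center e 0 v)); rewrite se.
by move: (ball_trans h1 h); rewrite add1n.
Qed.

Lemma ball_sub_rel e e' r u : (forall x y, e x y -> e' x y) ->
  ball e r u \subset ball e' r u.
Proof.
move=> hee; elim: r => [|r IH] //=; apply/subsetP => y /ball_succ [h|[x hx exy]].
  by rewrite inE (subsetP IH).
by apply: (ball_edge (subsetP IH _ hx)); apply: hee.
Qed.

Lemma ball_induced e X r u : ball e r u \subset X ->
  ball e r u \subset ball (induced e X) r u.
Proof.
elim: r => [|r IH] //= hsub; apply/subsetP => y /ball_succ [h|[x hx exy]].
  by rewrite inE (subsetP (IH (subset_trans (ball_step _ _ _) hsub))).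
apply: (ball_edge (subsetP (IH (subset_trans (ball_step _ _ _) hsub)) _ hx)).
rewrite /induced exy andbT (subsetP hsub) ?(subsetP hsub) //.
  by apply: ball_edge hx exy.
by apply: (subsetP (ball_step _ _ _)).
Qed.

Lemma induced_sym e X : symmetric e -> symmetric (induced e X).
Proof. by move=> se x y; rewrite /induced se andbCA. Qed.

Lemma path_ball e x p : path e x p -> last x p \in ball e (size p) x.
Proof.
elim: p x => [|z p IH] x /=; first by rewrite inE.
move=> /andP[exz /IH h].
have h1 : z \in ball e 1 x by apply: (ball_edge (ball_center e 0 x)).
by move: (ball_trans h1 h); rewrite add1n.
Qed.

Lemma connect_ball e x y : connect e x y -> exists2 n, n < #|T| & y \in ball e n x.
Proof.
move=> /connectP [p hp ->]; case: (shortenP hp) => p' hp' hu _.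
exists (size p'); last exact: path_ball.
by move/card_uniqP: hu => /= <-; apply: max_card.
Qed.

Lemma dist_le e x y n : y \in ball e n x -> dist e x y <= n.
Proof.
move=> h; rewrite /dist; set s := iota 0 #|T|.+1.
case: (ltnP n (size s)) => hn; last first.
  by apply: leq_trans (find_size _ _) hn.
rewrite leqNgt; apply/negP => /(before_find 0).
by rewrite /s nth_iota ?add0n ?h //; move: hn; rewrite size_iota.
Qed.

Lemma dist_ball e x y : connect e x y -> y \in ball e (dist e x y) x.
Proof.
move=> /connect_ball [n hn h].
have hs : has (fun n => y \in ball e n x) (iota 0 #|T|.+1).
  by apply/hasP; exists n; rewrite // mem_iota add0n ltnS (ltnW hn).
have hf := hs; rewrite has_find size_iota in hf.
by move: (nth_find 0 hs); rewrite nth_iota ?add0n.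
Qed.

End Balls.

Section Part1.
Variables (T : finType) (e : rel T) (a : nat) (VD : {set T}) (k : nat)
  (Ss : 'I_k -> {set T}).
Hypothesis se : symmetric e.
Hypothesis hdisj : forall i j : 'I_k, i != j -> [disjoint Ss i & Ss j].
Hypothesis hVD : forall u, u \in VD ->
     (exists i : 'I_k, ball e a u \subset Ss i) \/
     [disjoint ball e a u & \bigcup_(i < k) Ss i].

Lemma idx_uniq x i j : x \in Ss i -> x \in Ss j -> i = j.
Proof.
move=> hi hj; case: (eqVneq i j) => // /hdisj hd.
by move: (disjointFr hd hi); rewrite hj.
Qed.

Lemma card_split (Z : {set T}) : Z \subset \bigcup_(i < k) Ss i ->
  #|Z| = \sum_(i < k) #|Z :&: Ss i|.
Proof.
move=> hZ.
transitivity (\sum_(i < k) \sum_(x in Z) (if x \in Ss i then 1 else 0)); last first.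
  apply: eq_bigr => i _; rewrite -sum1_card -big_mkcondr /=.
  by apply: eq_bigl => x; rewrite !inE.
rewrite exchange_big /= -sum1_card; apply: eq_bigr => x hx.
have /bigcupP [j _ hj] := subsetP hZ x hx.
rewrite (bigD1 j) //= hj big1 // => i /negPf hne.
case: ifP => // hi; by rewrite (idx_uniq hi hj) eqxx in hne.
Qed.

Lemma ball_in u i : u \in VD -> u \in Ss i -> ball e a u \subset Ss i.
Proof.
move=> hu hi; case: (hVD hu) => [[p hp]|hd].
  by rewrite -(idx_uniq (subsetP hp _ (ball_center e a u)) hi).
have : u \in \bigcup_(i < k) Ss i by apply/bigcupP; exists i.
by rewrite (disjointFr hd (ball_center e a u)).
Qed.

Lemma S_VD u : u \in VD -> u \in thicken e a (\bigcup_(i < k) Ss i) ->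
  exists i, u \in Ss i.
Proof.
move=> hu; rewrite inE => /existsP [x /andP [hxU hxb]].
case: (hVD hu) => [[p hp]|hd].
  by exists p; apply: (subsetP hp); apply: ball_center.
by move: (disjointFr hd hxb); rewrite hxU.
Qed.

Lemma Ss_sub i : Ss i \subset thicken e a (\bigcup_(i < k) Ss i).
Proof.
apply/subsetP => x hx; rewrite inE; apply/existsP; exists x.
by rewrite ball_center andbT; apply/bigcupP; exists i.
Qed.

Lemma sep_sub (Y Y' : {set T}) : Y' \subset Y -> separated e a Y -> separated e a Y'.
Proof.
move=> hs /forallP hY; apply/forallP => u; apply/implyP => hu.
have /implyP/(_ (subsetP hs _ hu))/forallP hYu := hY u.
apply/forallP => v; apply/implyP => hv.
by have /implyP := hYu v; apply; apply: (subsetP hs).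
Qed.

Definition Pmax i (Y : {set T}) :=
  (Y \subset Ss i :&: VD) && separated e a Y && (#|Y| == Nnum e a VD (Ss i)).

Definition Yf i := odflt set0 [pick Y | Pmax i Y].

Lemma Yf_spec i : Pmax i (Yf i).
Proof.
rewrite /Yf; case: pickP => [Y hY //|hnone]; exfalso.
have h0 : (set0 \subset Ss i :&: VD) && separated e a set0.
  rewrite sub0set /=; apply/forallP => u; by rewrite inE.
move: (hnone [arg max_(Y > set0 | (Y \subset Ss i :&: VD) && separated e a Y) #|Y|]).
rewrite /Pmax /Nnum -(@bigmax_eq_arg _ set0 (fun Y => (Y \subset Ss i :&: VD) && separated e a Y) (fun Y => #|Y|) h0) eqxx andbT.
by case: arg_maxnP => // Y ->.
Qed.

Lemma part1 : Nnum e a VD (thicken e a (\bigcup_(i < k) Ss i)) =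
  \sum_(i < k) Nnum e a VD (Ss i).
Proof.
apply/eqP; rewrite eqn_leq; apply/andP; split.
  apply/bigmax_leqP => Y /andP [hY hsep].
  have hYU : Y \subset \bigcup_(i < k) Ss i.
    apply/subsetP => y hy; move: (subsetP hY y hy); rewrite inE => /andP [h1 h2].
    by have [i hi] := S_VD h2 h1; apply/bigcupP; exists i.
  rewrite (card_split hYU); apply: leq_sum => i _; apply: leq_bigmax_cond.
  rewrite (sep_sub _ hsep) ?subsetIl // andbT.
  apply/subsetP => y; rewrite !inE => /andP [hy ->] /=.
  by move: (subsetP hY y hy); rewrite inE => /andP [_ ->].
pose Z := \bigcup_(i < k) Yf i.
have hYfs i : Yf i \subset Ss i :&: VD by case/andP: (Yf_spec i) => /andP [].
have hZU : Z \subset \bigcup_(i < k) Ss i.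
  apply/subsetP => z /bigcupP [i _ hz]; apply/bigcupP; exists i => //.
  by move: (subsetP (hYfs i) z hz); rewrite inE => /andP [].
have hZi i : Z :&: Ss i = Yf i.
  apply/setP => z; rewrite !inE; apply/andP/idP => [[/bigcupP [j _ hz] hzi]|hz].
    move: (subsetP (hYfs j) z hz); rewrite inE => /andP [hzj _].
    by rewrite (idx_uniq hzi hzj).
  split; first by apply/bigcupP; exists i.
  by move: (subsetP (hYfs i) z hz); rewrite inE => /andP [].
have -> : \sum_(i < k) Nnum e a VD (Ss i) = #|Z|.
  rewrite (card_split hZU); apply: eq_bigr => i _; rewrite hZi.
  by case/andP: (Yf_spec i) => _ /eqP ->.
apply: leq_bigmax_cond; apply/andP; split.
  apply/subsetP => z /bigcupP [i _ hz]; move: (subsetP (hYfs i) z hz).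
  rewrite !inE => /andP [hzi ->]; rewrite andbT.
  by move: (subsetP (Ss_sub i) z hzi); rewrite inE.
apply/forallP => u; apply/implyP => /bigcupP [i _ hu].
apply/forallP => v; apply/implyP => /bigcupP [j _ hv].
apply/implyP => huv.
case: (eqVneq i j) => [eij|nij].
  subst j; case/andP: (Yf_spec i) => /andP [_ /forallP hs] _.
  have /implyP /(_ hu) /forallP /(_ v) /implyP /(_ hv) /implyP := hs u.
  by apply.
move: (subsetP (hYfs i) u hu) (subsetP (hYfs j) v hv); rewrite !inE.
move=> /andP [hui huV] /andP [hvj hvV].
apply/negP; rewrite mul2n -addnn => /ball_split [w hw1 hw2].
have hw3 := ball_sym se hw2.
move: (subsetP (ball_in huV hui) w hw1) (subsetP (ball_in hvV hvj) w hw3).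
by move=> h1 h2; move: nij; rewrite (idx_uniq h1 h2) eqxx.
Qed.

End Part1.

Lemma diam_ball (T : finType) (e : rel T) (X : {set T}) d x x' :
  diam e X = Some d -> x \in X -> x' \in X -> x' \in ball (induced e X) d x.
Proof.
rewrite /diam; case: ifP => // /forallP hc [<-] hx hx'.
have := hc x; rewrite hx /= => /forallP /(_ x'); rewrite hx' /= => hcon.
apply: (subsetP (ball_mono _ _ _)) (dist_ball hcon).
apply: (bigmax_sup x) => //; exact: (bigmax_sup x').
Qed.

Section Part2.
Variables (T : finType) (e : rel T) (a : nat) (k : nat) (Ss : 'I_k -> {set T}).
Hypothesis se : symmetric e.
Let U := \bigcup_(i < k) Ss i.
Let S := thicken e a U.
Let Tj j := thicken e a (Ss j).

Lemma S_T v : v \in S -> exists j, v \in Tj j.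
Proof.
rewrite inE => /existsP [x /andP [/bigcupP [j _ hj] hb]]; exists j.
by rewrite inE; apply/existsP; exists x; rewrite hj.
Qed.

Lemma T_S j v : v \in Tj j -> v \in S.
Proof.
rewrite !inE => /existsP [x /andP [hj hb]]; apply/existsP; exists x.
by rewrite hb andbT; apply/bigcupP; exists j.
Qed.

Lemma Ss_T j : Ss j \subset Tj j.
Proof. by apply/subsetP => x hx; rewrite inE; apply/existsP; exists x; rewrite hx ball_center. Qed.

Lemma ball_T j x : x \in Ss j -> ball e a x \subset Tj j.
Proof.
move=> hx; apply/subsetP => w hw; rewrite inE; apply/existsP; exists x.
by rewrite hx (ball_sym se hw).
Qed.

Lemma T_sub j : Tj j \subset S.
Proof. by apply/subsetP => v; apply: T_S. Qed.

Lemma T_diam j d y z : diam e (Ss j) = Some d -> y \in Tj j -> z \in Tj j ->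
  z \in ball (induced e S) (d + 2 * a) y.
Proof.
move=> hd; rewrite !inE => /existsP [x /andP [hx hxy]] /existsP [x' /andP [hx' hxz]].
have hsub : forall x0, x0 \in Ss j -> ball e a x0 \subset ball (induced e S) a x0.
  move=> x0 h0; apply: ball_induced; apply: subset_trans (ball_T h0) (T_sub j).
have h1 : x \in ball (induced e S) a y.
  apply: (ball_sym (induced_sym _ se)); apply: (subsetP (hsub _ hx)).
  exact: ball_sym se hxy.
have h2 : x' \in ball (induced e S) d x.
  apply: (subsetP (ball_sub_rel _ _ _)) (diam_ball hd hx hx') => u v.
  rewrite /induced => /and3P [hu hv ->].
  by rewrite !(subsetP (subset_trans (Ss_T j) (T_sub j))).
have h3 : z \in ball (induced e S) a x'.
  by apply: (subsetP (hsub _ hx')); apply: ball_sym se hxz.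
have := ball_trans (ball_trans h1 h2) h3.
by have -> : a + d + a = d + 2 * a by lia.
Qed.

End Part2.

Lemma crossing (T : finType) (e : rel T) (S X : {set T}) x0 y0 :
  symmetric e -> connect (induced e S) x0 y0 -> x0 \in X -> y0 \notin X ->
  exists x y, [&& x \in X, y \notin X & induced e S x y].
Proof.
move=> se hc hx0 hy0.
case: (boolP [exists x, exists y, [&& x \in X, y \notin X & induced e S x y]]).
  by move=> /existsP [x /existsP [y h]]; exists x, y.
rewrite negb_exists => /forallP hno.
have cl : closed (induced e S) X.
  move=> x y hxy; case hx: (x \in X); case hy: (y \in X) => //.
    by move: (hno x); rewrite negb_exists => /forallP /(_ y); rewrite hx hy hxy.
  move: (hno y); rewrite negb_exists => /forallP /(_ x).
  by rewrite hx hy (induced_sym _ se) hxy.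
by move: (closed_connect cl hc); rewrite hx0 (negPf hy0).
Qed.

Lemma arith1 n m a : 1 <= n -> (n - 1).+1 + (m + 2 * a) = m + 2 * a + 1 + n - 1.
Proof. lia. Qed.

Section Part3.
Variables (T : finType) (e : rel T) (a : nat) (k : nat) (Ss : 'I_k -> {set T}).
Hypothesis se : symmetric e.
Hypothesis hne : forall i, Ss i != set0.
Let U := \bigcup_(i < k) Ss i.
Let S := thicken e a U.
Let Tj j := thicken e a (Ss j).
Hypothesis hcon : induced_connected e S.
Variable d : 'I_k -> nat.
Hypothesis hd : forall i, diam e (Ss i) = Some (d i).
Let w i := d i + 2 * a + 1.
Let W (C : {set 'I_k}) := \sum_(i in C) w i.

Lemma W_ge i (C : {set 'I_k}) : i \in C -> w i <= W C.
Proof. by move=> hi; rewrite /W (bigD1 i) //= leq_addr. Qed.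

Lemma W_all (C : {set 'I_k}) : W C <= \sum_(i < k) w i.
Proof. by rewrite /W big_mkcond /=; apply: leq_sum => i _; case: ifP. Qed.

Lemma grow u (hu : u \in S) n : exists C : {set 'I_k},
  [/\ C != set0, forall i, i \in C -> Tj i \subset ball (induced e S) (W C - 1) u &
      (n <= #|C| \/ forall v, v \in S -> exists2 i, i \in C & v \in Tj i)].
Proof.
elim: n => [|n [C [hC hT hor]]].
  have [i0 hi0] := S_T hu; exists [set i0]; split.
  - by apply/set0Pn; exists i0; rewrite inE.
  - move=> i; rewrite inE => /eqP ->; rewrite /W big_set1 /w addnK.
    by apply/subsetP => z hz; apply: (T_diam se (hd i0) hi0 hz).
  - by left.
case: (boolP [forall v in S, exists i in C, v \in Tj i]) => [/forallP hcov|].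
  exists C; split => //; right => v hv.
  by have /implyP /(_ hv) /existsP [i /andP [hi hvi]] := hcov v; exists i.
rewrite negb_forall => /existsP [v]; rewrite negb_imply => /andP [hv hnv].
have hor' : n <= #|C|.
  case: hor => // hc; have [i hi hvi] := hc v hv.
  by move: hnv; rewrite negb_exists => /forallP /(_ i); rewrite hi hvi.
pose X := \bigcup_(i in C) Tj i.
have [i1 hi1] := set0Pn _ hC.
have [x1 hx1] := set0Pn _ (hne i1).
have hx1X : x1 \in X by apply/bigcupP; exists i1 => //; apply: (subsetP (Ss_T e a Ss i1)).
have hvX : v \notin X.
  apply/negP => /bigcupP [i hi hvi].
  by move: hnv; rewrite negb_exists => /forallP /(_ i); rewrite hi hvi.
have hx1S : x1 \in S by apply: (T_S (j := i1)); apply: (subsetP (Ss_T e a Ss i1)).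
have hc : connect (induced e S) x1 v.
  case/andP: hcon => _ /forallP /(_ x1) /implyP /(_ hx1S) /forallP /(_ v) /implyP.
  by apply.
have [x [y /and3P [hxX hyX hxy]]] := crossing se hc hx1X hvX.
have hyS : y \in S by case/and3P: hxy.
have [j hj] := S_T hyS.
have hjC : j \notin C by apply/negP => hjC; move: hyX; apply/negP/negPn/bigcupP; exists j.
have hWC : 1 <= W C by apply: leq_trans (W_ge hi1); rewrite /w addn1.
have hWC' : W (j |: C) = w j + W C by rewrite /W big_setU1.
exists (j |: C); split.
- by apply/set0Pn; exists j; rewrite !inE eqxx.
- have hxb : x \in ball (induced e S) (W C - 1) u.
    by case/bigcupP: hxX => i hi hxi; apply: (subsetP (hT i hi)).
  have hyb := ball_edge hxb hxy.
  move=> i; rewrite !inE => /orP [/eqP ->|hi].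
    apply/subsetP => z hz; have := ball_trans hyb (T_diam se (hd j) hj hz).
    suff -> : (W C - 1).+1 + (d j + 2 * a) = W (j |: C) - 1 by [].
    rewrite hWC' /w; exact: (arith1 _ _ hWC).
  apply: subset_trans (hT i hi) (ball_mono _ _ _); rewrite hWC'.
  by apply: leq_sub2r; apply: leq_addl.
- by left; rewrite cardsU1 hjC add1n ltnS.
Qed.

Lemma diam_bound u v : u \in S -> v \in S ->
  v \in ball (induced e S) (\sum_(i < k) w i - 1) u.
Proof.
move=> hu hv; have [C [hC hT [hn|hcov]]] := grow hu k.+1.
  by move: (max_card C); rewrite card_ord leqNgt hn.
have [i hi hvi] := hcov v hv.
apply: (subsetP (ball_mono _ _ _)) (subsetP (hT i hi) _ hvi).
by apply: leq_sub2r; apply: W_all.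
Qed.

End Part3.

Theorem lemmaB7 (T : finType) (e : rel T) (a : nat) (VD : {set T})
  (k : nat) (Ss : 'I_k -> {set T}) :
  simple_graph e ->
  0 < a ->
  (forall i j : 'I_k, i != j -> [disjoint Ss i & Ss j]) ->
  (forall i : 'I_k, Ss i != set0) ->
  (forall u, u \in VD ->
     (exists i : 'I_k, ball e a u \subset Ss i) \/
     [disjoint ball e a u & \bigcup_(i < k) Ss i]) ->
  let S := thicken e a (\bigcup_(i < k) Ss i) in
  induced_connected e S ->
  Nnum e a VD S = \sum_(i < k) Nnum e a VD (Ss i) /\
  ele (diam e S)
      (epred (\big[eadd/Some 0]_(i < k) eadd (diam e (Ss i)) (Some (2 * a + 1)))).
Proof.
move=> [se _] _ hdisj hne hVD S hcon; split; first exact: part1.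
case: (boolP [forall i, diam e (Ss i) != None]) => [/forallP hall|].
  pose d i := odflt 0 (diam e (Ss i)).
  have hd i : diam e (Ss i) = Some (d i).
    by rewrite /d; move: (hall i); case: (diam e (Ss i)).
  have -> : \big[eadd/Some 0]_(i < k) eadd (diam e (Ss i)) (Some (2 * a + 1)) =
            Some (\sum_(i < k) (d i + 2 * a + 1)).
    apply: (big_ind2 (fun x n => x = Some n)) => //.
      by move=> x1 x2 y1 y2 -> ->.
    by move=> i _; rewrite hd /= addnA.
  have hc := hcon; rewrite /diam; case/andP: hc => _ ->.
  rewrite /=; apply/bigmax_leqP => u hu; apply/bigmax_leqP => v hv.
  by apply: dist_le; apply: (diam_bound se hne hcon hd hu hv).
rewrite negb_forall => /existsP [i0]; rewrite negbK => /eqP hi0.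
have -> : \big[eadd/Some 0]_(i < k) eadd (diam e (Ss i)) (Some (2 * a + 1)) = None.
  have : \big[orb/false]_(i < k) (diam e (Ss i) == None) ->
         \big[eadd/Some 0]_(i < k) eadd (diam e (Ss i)) (Some (2 * a + 1)) = None.
    apply: (big_ind2 (fun x (b : bool) => b -> x = None)) => //.
      by move=> x1 b1 y1 b2 h1 h2 /orP [/h1 ->|/h2 ->] //; case: x1 {h1}.
    by move=> i _ /eqP ->.
  apply; rewrite big_orE; apply/existsP; exists i0; rewrite hi0.
  done.
by case: (diam e S).
Qed.
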